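(* Let $C>0$ and $\beta_1>1/\sqrt2$ be constants, and suppose that $$-4\sum_{n=1}^\infty\log\big(1-e^{-2n\beta^2}\big)<\frac{C}{\beta^2}$$ holds for $\beta=\beta_1$. Then it holds for all $\beta\ge\beta_1$. *)

(* Defs.v *)
From Stdlib Require Import Reals.
From Coquelicot Require Import Coquelicot.
Open Scope R_scope.

(* theta_log_sum beta = sum_{n>=1} log(1 - exp(-2 n beta^2)).
   Index k : nat corresponds to n = k+1. *)
Definition theta_log_sum (beta : R) : R :=
  Series (fun k : nat => ln (1 - exp (- (2 * INR (S k) * beta ^ 2)))).

Definition ineq_holds (C beta : R) : Prop :=
  -4 * theta_log_sum beta < C / beta ^ 2.

(* Main.v *)
Require Import Defs.
From Stdlib Require Import Reals Lra.
From Coquelicot Require Import Coquelicot.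
Open Scope R_scope.

Lemma ln_lt_sub1 (y : R) : 1 < y -> ln y < y - 1.
Proof.
  intros Hy.
  assert (Hl : 0 < ln y) by (rewrite <- ln_1; apply ln_increasing; lra).
  pose proof (exp_ineq1 (ln y) ltac:(lra)) as H.
  rewrite exp_ln in H; lra.
Qed.

Lemma exp_neg_bounds (t : R) : 1 <= t -> 0 < exp (- t) <= / 2.
Proof.
  intros Ht. split. apply exp_pos.
  pose proof (exp_ineq1 1 ltac:(lra)) as H1.
  assert (exp (-t) <= exp (- (1))).
  { destruct (Req_dec t 1). subst; right; reflexivity. left; apply exp_increasing; lra. }
  rewrite (exp_Ropp 1) in H.
  assert (/ exp 1 < / 2) by (apply Rinv_lt_contravar; lra).
  lra.
Qed.

Lemma key_ineq (u t : R) : 0 < u <= /2 -> 1 <= t ->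
  0 < ln (1 - u) + t * (u / (1 - u)).
Proof.
  intros Hu Ht.
  assert (H1 : 1 < / (1 - u)).
  { rewrite <- Rinv_1. apply Rinv_lt_contravar; lra. }
  pose proof (ln_lt_sub1 _ H1) as H.
  rewrite ln_Rinv in H by lra.
  assert (/ (1 - u) - 1 = u / (1 - u)) by (field; lra).
  assert (0 < u / (1 - u)) by (apply Rdiv_lt_0_compat; lra).
  nra.
Qed.

Lemma term_mono (m x y : R) : 1 <= m -> / 2 <= x -> x <= y ->
  x * ln (1 - exp (- (2 * m * x))) <= y * ln (1 - exp (- (2 * m * y))).
Proof.
  intros Hm Hx Hxy.
  destruct (Req_dec x y) as [->|Hne]; [lra|].
  left.
  apply (incr_function_le (fun x => x * ln (1 - exp (- (2 * m * x)))) (Finite (/2)) p_infty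
    (fun x => ln (1 - exp (- (2 * m * x))) + (2 * m * x) * (exp (- (2 * m * x)) / (1 - exp (- (2 * m * x)))))).
  - intros z Hz _. simpl in Hz.
    assert (Hb := exp_neg_bounds (2 * m * z) ltac:(nra)).
    auto_derive. lra. unfold Rminus. field. lra.
  - intros z Hz _. simpl in Hz.
    apply key_ineq. apply exp_neg_bounds; nra. nra.
  - simpl; lra.
  - lra.
  - simpl; auto.
Qed.

Lemma exp_pow_S (a : R) (k : nat) : exp (- (2 * INR (S k) * a)) = exp (- (2 * a)) ^ (S k).
Proof.
  induction k.
  - simpl. replace (2*1*a) with (2*a) by ring. ring.
  - rewrite S_INR. replace (- (2 * (INR (S k) + 1) * a)) with (- (2 * INR (S k) * a) + - (2 * a)) by ring.
    rewrite exp_plus, IHk. simpl. ring.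
Qed.

Lemma ex_series_terms (x : R) : / 2 <= x ->
  ex_series (fun k : nat => ln (1 - exp (- (2 * INR (S k) * x)))).
Proof.
  intros Hx.
  set (q := exp (- (2 * x))).
  assert (Hq : 0 < q <= /2) by (apply exp_neg_bounds; lra).
  apply (ex_series_le (K := R_AbsRing) (V := R_CompleteNormedModule) _ (fun n => scal (2 * q) (q ^ n))).
  2:{ apply (ex_series_scal_l (K := R_AbsRing) (V := R_NormedModule)), ex_series_geom. rewrite Rabs_pos_eq; lra. }
  intros n. rewrite exp_pow_S. fold q.
  change (norm (ln (1 - q ^ S n))) with (Rabs (ln (1 - q ^ S n))).
  change (scal (2 * q) (q ^ n)) with (2 * q * q ^ n).
  assert (Hu : 0 < q ^ S n <= / 2).
  { split. apply pow_lt; lra.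
    simpl. assert (q ^ n <= 1). { rewrite <- (pow1 n). apply pow_incr; lra. }
    assert (0 <= q ^ n) by (apply pow_le; lra). nra. }
  pose proof (key_ineq _ 1 Hu ltac:(lra)) as K.
  assert (ln (1 - q ^ S n) <= 0).
  { rewrite <- ln_1. destruct (Req_dec (1 - q ^ S n) 1). lra. left. apply ln_increasing; lra. }
  rewrite Rabs_left1 by lra.
  assert (q ^ S n / (1 - q ^ S n) <= 2 * q ^ S n).
  { apply (Rmult_le_reg_r (1 - q ^ S n)). lra.
    unfold Rdiv. rewrite Rmult_assoc, Rinv_l by lra. nra. }
  simpl in *. lra.
Qed.

Lemma terms_nonpos (x : R) (k : nat) : / 2 <= x ->
  ln (1 - exp (- (2 * INR (S k) * x))) <= 0.
Proof.
  intros Hx.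
  assert (H1 : 1 <= INR (S k)) by (rewrite S_INR; pose proof (pos_INR k); lra).
  assert (Hb := exp_neg_bounds (2 * INR (S k) * x) ltac:(nra)).
  rewrite <- ln_1. left. apply ln_increasing; lra.
Qed.

Theorem lemma2p12 (C beta1 : R) :
  0 < C -> 1 / sqrt 2 < beta1 -> ineq_holds C beta1 ->
  forall beta : R, beta1 <= beta -> ineq_holds C beta.
Proof.
  intros HC Hb1 Hh beta Hb.
  assert (Hs : 0 < sqrt 2) by (apply sqrt_lt_R0; lra).
  assert (Hss : sqrt 2 * sqrt 2 = 2) by (apply sqrt_sqrt; lra).
  assert (Hb1' : 1 < sqrt 2 * beta1).
  { apply (Rmult_lt_compat_l (sqrt 2)) in Hb1; auto.
    replace (sqrt 2 * (1 / sqrt 2)) with 1 in Hb1 by (field; lra). lra. }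
  assert (Hpos1 : 0 < beta1) by nra.
  assert (Hx1 : / 2 <= beta1 ^ 2) by nra.
  assert (Hx : beta1 ^ 2 <= beta ^ 2) by nra.
  assert (Hbp : 0 < beta ^ 2) by nra.
  unfold ineq_holds, theta_log_sum in *.
  set (a := fun x k => ln (1 - exp (- (2 * INR (S k) * x)))).
  change (Series (fun k : nat => ln (1 - exp (- (2 * INR (S k) * beta1 ^ 2))))) with (Series (a (beta1 ^ 2))) in Hh.
  change (Series (fun k : nat => ln (1 - exp (- (2 * INR (S k) * beta ^ 2))))) with (Series (a (beta ^ 2))).
  assert (Hle : Series (fun n => - beta ^ 2 * a (beta ^ 2) n) <= Series (fun n => - beta1 ^ 2 * a (beta1 ^ 2) n)).
  { apply Series_le.
    - intros n. unfold a.
      assert (H1 : 1 <= INR (S n)) by (rewrite S_INR; pose proof (pos_INR n); lra).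
      pose proof (terms_nonpos (beta ^ 2) n ltac:(lra)).
      pose proof (term_mono (INR (S n)) _ _ H1 Hx1 Hx). nra.
    - apply (ex_series_scal_l (V := R_NormedModule) (- beta1 ^ 2) (a (beta1 ^ 2))).
      apply ex_series_terms; lra. }
  rewrite !Series_scal_l in Hle.
  apply (Rmult_lt_compat_r (beta1 ^ 2)) in Hh; [|lra].
  replace (C / beta1 ^ 2 * beta1 ^ 2) with C in Hh by (field; lra).
  apply (Rmult_lt_reg_r (beta ^ 2)); [lra|].
  replace (C / beta ^ 2 * beta ^ 2) with C by (field; lra).
  lra.
Qed.
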